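(* Let $h_1,h_2\in\mathbb{C}\setminus\{0\}$ with $|h_1|>|h_2|$, deadlines $D_1<D_2$, minimum blocklength $\hat m>0$, power budget $P_{\max}>0$, packet sizes $N_1,N_2>0$ and error probabilities $\epsilon_1,\epsilon_2\in(0,1)$. For $k=1,2$ define, for $m>0,\gamma>0$, $$F_k(m,\gamma)=\sqrt{\frac{1}{m}\left(1-\frac{1}{(\gamma+1)^2}\right)}\,\frac{Q^{-1}(\epsilon_k)}{\ln 2}-\log_2(1+\gamma)+\frac{N_k}{m},$$ and let $\Gamma_k(m)$ denote the implicit function defined by $F_k(m,\Gamma_k(m))=0$, $\Gamma_k(m)>0$. Consider the problem $$\min_{\{m_k,p_k,\gamma_k\}_{k=1,2}} m_1p_1+m_2p_2$$ subject to $F_k(m_k,\gamma_k)=0$, $\hat m\le m_k\le D_k$, $p_k\ge0$ for $k=1,2$, $p_1+p_2\le P_{\max}$, $\gamma_1=\frac{p_1|h_1|^2}{p_2|h_1|^2+1}$, $\gamma_2=\frac{p_2|h_2|^2}{p_1|h_2|^2+1}$. If $\frac{Q^{-1}(\epsilon_k)}{\sqrt{N_k}}\le \frac{2\sqrt{\ln 2}}{4-\sqrt2}=0.64394\ldots$ for $k=1,2$ and the problem is feasible, then an optimal solution is $$m_k^*=D_k,\quad \gamma_k^*=\Gamma_k(D_k)\ (k=1,2),$$ $$p_1^*=\frac{\gamma_1^*|h_2|^2+\gamma_1^*\gamma_2^*|h_1|^2}{|h_1|^2|h_2|^2(1-\gamma_1^*\gamma_2^* )},\quad p_2^*=\frac{\gamma_2^*|h_1|^2+\gamma_1^*\gamma_2^*|h_2|^2}{|h_1|^2|h_2|^2(1-\gamma_1^*\gamma_2^*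 )}.$$
   Context: $Q^{-1}$ is the inverse of the Gaussian Q-function. The setting is a two-user single-antenna downlink with superposition coding and unit noise variances, in which both receivers treat the other receiver's signal as noise. Blocklengths $m_k$ are treated as continuous variables. The constraint $F_k(m_k,\gamma_k)=0$ is the finite-blocklength rate relation $\frac{N_k}{m_k}=\log_2(1+\gamma_k)-\sqrt{\frac{1}{m_k}\big(1-\frac{1}{(1+\gamma_k)^2}\big)}\frac{Q^{-1}(\epsilon_k)}{\ln2}$. *)

(* Defs.v *)
From Stdlib Require Import Reals ClassicalEpsilon.
From Coquelicot Require Import Coquelicot.
Open Scope R_scope.

Definition Qfun (x : R) : R :=
  / sqrt (2 * PI) *
  RInt_gen (fun t => exp (- (t ^ 2) / 2)) (at_point x) (Rbar_locally p_infty).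

Definition Qinv (eps : R) : R :=
  epsilon (inhabits 0) (fun q => Qfun q = eps).

Definition log2 (x : R) : R := ln x / ln 2.

Definition Ffun (eps N m g : R) : R :=
  sqrt (/ m * (1 - / (g + 1) ^ 2)) * Qinv eps / ln 2
  - log2 (1 + g) + N / m.

Definition Gam (eps N m : R) : R :=
  epsilon (inhabits 0) (fun g => 0 < g /\ Ffun eps N m g = 0).

(* Feasible set of the optimization problem; a1 = |h1|^2, a2 = |h2|^2 *)
Definition feasible (a1 a2 D1 D2 mhat Pmax N1 N2 eps1 eps2 : R)
  (m1 m2 p1 p2 g1 g2 : R) : Prop :=
  Ffun eps1 N1 m1 g1 = 0 /\ Ffun eps2 N2 m2 g2 = 0 /\
  mhat <= m1 <= D1 /\ mhat <= m2 <= D2 /\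
  0 <= p1 /\ 0 <= p2 /\ p1 + p2 <= Pmax /\
  g1 = p1 * a1 / (p2 * a1 + 1) /\
  g2 = p2 * a2 / (p1 * a2 + 1).

Definition objective (m1 m2 p1 p2 : R) : R := m1 * p1 + m2 * p2.

(* Main.v *)
Require Import Defs.
From Stdlib Require Import Reals Lra Psatz ClassicalEpsilon.
From Coquelicot Require Import Coquelicot.
Open Scope R_scope.
Lemma ln2_pos : 0 < ln 2.
Proof. pose proof ln_lt_2; lra. Qed.
Lemma ln_pos1 x : 0 < x -> 0 < ln (1 + x).
Proof. intros. rewrite <- ln_1. apply ln_increasing; lra. Qed.

Lemma deriv_cont f x l : is_derive f x l -> continuity_pt f x.
Proof. intros H. apply continuity_pt_filterlim. apply (ex_derive_continuous (V:=R_NormedModule) f x). exists l; exact H. Qed.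

Definition Af (x:R) := (x + 2) / (x + 1) ^ 2.
Definition Bf (x:R) := ln (1 + x) / (x * ln 2).
Definition Ef (c N x : R) := sqrt (c^2 * Af x + 4 * N * Bf x) - c * sqrt (Af x).

Lemma Af_pos x : 0 < x -> 0 < Af x.
Proof. intros. unfold Af. apply Rdiv_lt_0_compat. lra. apply pow_lt; lra. Qed.
Lemma Bf_pos x : 0 < x -> 0 < Bf x.
Proof. intros. unfold Bf. apply Rdiv_lt_0_compat. now apply ln_pos1. pose proof ln2_pos. nra. Qed.

Definition alphaf x := (x + 3) / (x + 1) ^ 3.
Definition betaf x := ((1 + x) * ln (1 + x) - x) / (x ^ 2 * (1 + x) * ln 2).

Lemma E_deriv c N x : 0 < x -> 0 < N ->
  is_derive (Ef c N) x
   ((c^2 * (- alphaf x) + 4 * N * (- betaf x)) / (2 * sqrt (c^2 * Af x + 4 * N * Bf x))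
    - c * ((- alphaf x) / (2 * sqrt (Af x)))).
Proof.
  intros Hx HN. pose proof ln2_pos. pose proof (Af_pos x Hx). pose proof (Bf_pos x Hx).
  assert (0 < c^2 * Af x + 4 * N * Bf x) by (pose proof (pow2_ge_0 c); nra).
  unfold Ef, alphaf, betaf. unfold Af, Bf in *. auto_derive.
  - repeat split; try lra; try (apply Rgt_not_eq; nra).
    + replace (c * (c * 1) * ((x + 2) * / ((x + 1) * ((x + 1) * 1))) + 4 * N * (ln (1 + x) * / (x * ln 2)))
        with (c ^ 2 * ((x + 2) / (x + 1) ^ 2) + 4 * N * (ln (1 + x) / (x * ln 2))) by (field; lra). lra.
    + replace ((x + 2) * / ((x + 1) * ((x + 1) * 1))) with ((x + 2) / (x + 1) ^ 2) by (field; lra). lra.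
  - replace (c * (c * 1) * ((x + 2) * / ((x + 1) * ((x + 1) * 1))) + 4 * N * (ln (1 + x) * / (x * ln 2)))
        with (c ^ 2 * ((x + 2) / (x + 1) ^ 2) + 4 * N * (ln (1 + x) / (x * ln 2))) by (field; lra).
    replace ((x + 2) * / ((x + 1) * ((x + 1) * 1))) with ((x + 2) / (x + 1) ^ 2) by (field; lra).
    set (S := sqrt (c ^ 2 * ((x + 2) / (x + 1) ^ 2) + 4 * N * (ln (1 + x) / (x * ln 2)))).
    set (sv := sqrt ((x + 2) / (x + 1) ^ 2)).
    assert (0 < S) by (apply sqrt_lt_R0; lra).
    assert (0 < sv) by (apply sqrt_lt_R0; lra).
    field. repeat split; lra.
Qed.
Lemma ln_lower x : 0 <= x -> 2 * x / (2 + x) <= ln (1 + x).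
Proof.
  intros Hx. destruct (Req_dec x 0) as [->|H0].
  { replace (1+0) with 1 by ring. rewrite ln_1. replace (2*0/(2+0)) with 0 by field. lra. }
  set (h := fun y => ln (1 + y) - 2 * y / (2 + y)).
  assert (Hd : forall y, 0 <= y -> is_derive h y (y^2 / ((1+y) * (2+y)^2))).
  { intros y Hy. unfold h. auto_derive.
    - lra.
    - field. lra. }
  destruct (MVT_gen h 0 x (fun y => y^2 / ((1+y) * (2+y)^2))) as [c [Hc Heq]].
  { intros y Hy. rewrite Rmin_left in Hy by lra. rewrite Rmax_right in Hy by lra. apply Hd. lra. }
  { intros y Hy. rewrite Rmin_left in Hy by lra. rewrite Rmax_right in Hy by lra. eapply deriv_cont. apply Hd. lra. }
  rewrite Rmin_left in Hc by lra. rewrite Rmax_right in Hc by lra.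
  unfold h in Heq. rewrite Rplus_0_r, ln_1 in Heq.
  assert (0 <= c ^ 2 / ((1 + c) * (2 + c) ^ 2)).
  { apply Rle_mult_inv_pos. nra. apply Rmult_lt_0_compat; [lra| apply pow_lt; lra]. }
  replace (2 * 0 / (2 + 0)) with 0 in Heq by field.
  nra.
Qed.
Lemma poly_key x w : 0 < x -> x^2 <= (2+x)*w ->
  0 < 6*(x+2)*(1+x)^3*w^2 + x^2*(x+3)*(x^2+3*x+4)*w - (x+3)^2*x^4.
Proof.
  intros Hx Hw. set (t := (2+x)*w - x^2).
  assert (Ht : 0 <= t) by (unfold t; lra).
  assert (Hw' : w = (x^2 + t) / (2 + x)) by (unfold t; field; lra).
  assert (E : (2+x)^2 * (6*(x+2)*(1+x)^3*w^2 + x^2*(x+3)*(x^2+3*x+4)*w - (x+3)^2*x^4)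
     = x^4*(x+2)*2*(1+x)*(3*x^2+5*x) + t*(12*(x+2)*(1+x)^3*x^2 + x^2*(x+3)*(x^2+3*x+4)*(2+x))
       + 6*(x+2)*(1+x)^3*t^2).
  { rewrite Hw'. field. lra. }
  assert (0 < x^4*(x+2)*2*(1+x)*(3*x^2+5*x)).
  { repeat apply Rmult_lt_0_compat; try lra; try (apply pow_lt; lra); nra. }
  assert (0 <= t*(12*(x+2)*(1+x)^3*x^2 + x^2*(x+3)*(x^2+3*x+4)*(2+x))).
  { apply Rmult_le_pos; [lra|]. 
    assert (0 < (1+x)^3) by (apply pow_lt; lra). assert (0 < x^2) by nra. 
    assert (0 < x^2+3*x+4) by nra. 
    assert (0 <= 12*(x+2)*(1+x)^3*x^2) by (repeat apply Rmult_le_pos; lra).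
    assert (0 <= x^2*(x+3)*(x^2+3*x+4)*(2+x)) by (repeat apply Rmult_le_pos; lra). lra. }
  assert (0 <= 6*(x+2)*(1+x)^3*t^2).
  { assert (0 < (1+x)^3) by (apply pow_lt; lra). assert (0 <= t^2) by nra.
    repeat apply Rmult_le_pos; lra. }
  assert (0 < (2+x)^2) by nra.
  nra.
Qed.

Lemma E_deriv_neg c N x : 0 < x -> 0 < N -> (0 < c -> 3 * c^2 * ln 2 <= 2 * N) ->
  (c^2 * (- alphaf x) + 4 * N * (- betaf x)) / (2 * sqrt (c^2 * Af x + 4 * N * Bf x))
    - c * ((- alphaf x) / (2 * sqrt (Af x))) < 0.
Proof.
  intros Hx HN Hc. pose proof ln2_pos as Hl2. pose proof (Af_pos x Hx) as Ha. pose proof (Bf_pos x Hx) as Hb.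
  assert (HSa : 0 < c^2 * Af x + 4 * N * Bf x) by (pose proof (pow2_ge_0 c); nra).
  set (S := sqrt (c ^ 2 * Af x + 4 * N * Bf x)).
  set (sA := sqrt (Af x)).
  assert (HS : 0 < S) by (apply sqrt_lt_R0; lra).
  assert (HsA : 0 < sA) by (apply sqrt_lt_R0; lra).
  assert (HS2 : S * S = c ^ 2 * Af x + 4 * N * Bf x) by (apply sqrt_sqrt; lra).
  assert (HsA2 : sA * sA = Af x) by (apply sqrt_sqrt; lra).
  pose proof (ln_lower x ltac:(lra)) as Hlow.
  set (l := ln (1 + x)) in *.
  assert (Hw : x^2 <= (2+x) * ((1+x) * l - x)).
  { assert (2 * x <= (2 + x) * l).
    { apply (Rmult_le_compat_l (2+x)) in Hlow; [|lra].
      replace ((2 + x) * (2 * x / (2 + x))) with (2 * x) in Hlow by (field; lra). lra. }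
    nra. }
  assert (Hal : 0 < alphaf x).
  { unfold alphaf. apply Rdiv_lt_0_compat. lra. apply pow_lt; lra. }
  assert (Hbe : 0 < betaf x).
  { unfold betaf. fold l. apply Rdiv_lt_0_compat.
    - assert (0 < x^2) by nra. assert (0 < (2+x)*((1+x)*l - x)) by lra. nra.
    - repeat apply Rmult_lt_0_compat; try lra; nra. }
  set (al := alphaf x) in *. set (be := betaf x) in *.
  set (X := (c^2 * al + 4 * N * be) * sA). set (Y := c * al * S).
  assert (HX : 0 < X). { unfold X. apply Rmult_lt_0_compat; [|lra]. pose proof (pow2_ge_0 c). nra. }
  assert (Hlt : Y < X).
  { destruct (Rle_or_lt c 0) as [Hc0|Hc0].
    - unfold Y. assert (c * al * S <= 0). { assert (0 <= - c * al * S) by (apply Rmult_le_pos; nra). lra. } lra.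
    - specialize (Hc Hc0).
      assert (HY : 0 < Y) by (unfold Y; apply Rmult_lt_0_compat; nra).
      set (T := 2 * be * Af x - al * Bf x).
      assert (HXY : X * X - Y * Y = 4 * N * (4 * N * be^2 * Af x + c^2 * al * T)).
      { unfold X, Y, T. replace ((c ^ 2 * al + 4 * N * be) * sA * ((c ^ 2 * al + 4 * N * be) * sA))
          with ((c ^ 2 * al + 4 * N * be)^2 * (sA * sA)) by ring.
        replace (c * al * S * (c * al * S)) with (c^2 * al^2 * (S * S)) by ring.
        rewrite HS2, HsA2. ring. }
      assert (HG : 0 < 4 * N * be^2 * Af x + c^2 * al * T).
      { assert (Hb2 : 0 < 4 * N * be^2 * Af x).
        { apply Rmult_lt_0_compat; [|lra]. apply Rmult_lt_0_compat; [lra|]. nra. }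
        destruct (Rle_or_lt 0 T) as [HT|HT].
        - assert (0 <= c^2 * al * T) by (apply Rmult_le_pos; [|lra]; pose proof (pow2_ge_0 c); nra). lra.
        - assert (Hc2 : c^2 <= 2 * N / (3 * ln 2)).
          { apply (Rmult_le_reg_r (3 * ln 2)); [lra|]. unfold Rdiv. rewrite Rmult_assoc, Rinv_l by lra. lra. }
          assert (Hm : c^2 * al * T >= 2 * N / (3 * ln 2) * al * T).
          { assert (al * T < 0) by nra. nra. }
          assert (Hpoly : 6 * ln 2 * be^2 * Af x + al * T =
             (6*(x+2)*(1+x)^3*((1+x)*l - x)^2 + x^2*(x+3)*(x^2+3*x+4)*((1+x)*l - x) - (x+3)^2*x^4)
             / (ln 2 * x^4 * (1+x)^7)).
          { unfold T, al, be, alphaf, betaf, Af, Bf. fold l. field. repeat split; lra. }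
          pose proof (poly_key x ((1+x)*l - x) Hx Hw) as Hk.
          assert (0 < 6 * ln 2 * be^2 * Af x + al * T).
          { rewrite Hpoly. apply Rdiv_lt_0_compat; [lra|].
            repeat apply Rmult_lt_0_compat; try lra; apply pow_lt; lra. }
          assert (4 * N * be ^ 2 * Af x + 2 * N / (3 * ln 2) * al * T
                  = 2 * N / (3 * ln 2) * (6 * ln 2 * be^2 * Af x + al * T)) by (field; lra).
          assert (0 < 2 * N / (3 * ln 2)) by (apply Rdiv_lt_0_compat; lra).
          nra. }
      nra. }
  replace ((c ^ 2 * - al + 4 * N * - be) / (2 * S) - c * (- al / (2 * sA)))
    with ((Y - X) / (2 * S * sA)) by (unfold X, Y; field; split; apply Rgt_not_eq; lra).
  assert (0 < / (2 * S * sA)) by (apply Rinv_0_lt_compat; nra). unfold Rdiv. nra.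
Qed.

Lemma ln_le_x x : -1 < x -> ln (1 + x) <= x.
Proof.
  intros Hx. destruct (Req_dec x 0) as [->|H0].
  - rewrite Rplus_0_r, ln_1; lra.
  - pose proof (exp_ineq1 x H0). left. rewrite <- (ln_exp x) at 2.
    apply ln_increasing; lra.
Qed.

Definition Vf (x:R) := 1 - / (x + 1) ^ 2.
Definition Lf (x:R) := ln (1 + x) / ln 2.
Definition Wf (c N x : R) := sqrt (c^2 * Vf x + 4 * N * Lf x) - c * sqrt (Vf x).

Lemma Vf_eq x : 0 <= x -> Vf x = x * (x + 2) / (x + 1) ^ 2.
Proof. intros. unfold Vf. field. lra. Qed.
Lemma Vf_pos x : 0 < x -> 0 < Vf x.
Proof. intros. rewrite Vf_eq by lra. apply Rdiv_lt_0_compat. nra. apply pow_lt; lra. Qed.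
Lemma Lf_pos x : 0 < x -> 0 < Lf x.
Proof. intros. unfold Lf. apply Rdiv_lt_0_compat. now apply ln_pos1. apply ln2_pos. Qed.

Lemma W_deriv c N x : 0 < x -> 0 < N ->
  is_derive (Wf c N) x
   ((c^2 * (2 / (x+1)^3) + 4 * N * (/ ((1+x) * ln 2))) / (2 * sqrt (c^2 * Vf x + 4 * N * Lf x))
    - c * ((2 / (x+1)^3) / (2 * sqrt (Vf x)))).
Proof.
  intros Hx HN. pose proof ln2_pos. pose proof (Vf_pos x Hx). pose proof (Lf_pos x Hx).
  assert (0 < c^2 * Vf x + 4 * N * Lf x) by (pose proof (pow2_ge_0 c); nra).
  unfold Wf. unfold Vf, Lf in *. auto_derive.
  - repeat split; try lra; try (apply Rgt_not_eq; nra).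
    + replace (c * (c * 1) * (1 + - / ((x + 1) * ((x + 1) * 1))) + 4 * N * (ln (1 + x) * / ln 2))
        with (c^2 * (1 - /(x+1)^2) + 4*N*(ln(1+x)/ln 2)) by (field; lra). lra.
    + replace (1 + - / ((x + 1) * ((x + 1) * 1))) with (1 - /(x+1)^2) by (field; lra). lra.
  - replace (c * (c * 1) * (1 + - / ((x + 1) * ((x + 1) * 1))) + 4 * N * (ln (1 + x) * / ln 2))
        with (c^2 * (1 - /(x+1)^2) + 4*N*(ln(1+x)/ln 2)) by (field; lra).
    replace (1 + - / ((x + 1) * ((x + 1) * 1))) with (1 - /(x+1)^2) by (field; lra).
    set (S := sqrt (c ^ 2 * (1 - / (x + 1) ^ 2) + 4 * N * (ln (1 + x) / ln 2))).
    set (sv := sqrt (1 - / (x + 1) ^ 2)).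
    assert (0 < S) by (apply sqrt_lt_R0; lra).
    assert (0 < sv) by (apply sqrt_lt_R0; lra).
    field. repeat split; lra.
Qed.

Lemma W_deriv_pos c N x : 0 < x -> 0 < N ->
  0 < (c^2 * (2 / (x+1)^3) + 4 * N * (/ ((1+x) * ln 2))) / (2 * sqrt (c^2 * Vf x + 4 * N * Lf x))
    - c * ((2 / (x+1)^3) / (2 * sqrt (Vf x))).
Proof.
  intros Hx HN. pose proof ln2_pos as Hl2. pose proof (Vf_pos x Hx). pose proof (Lf_pos x Hx).
  assert (HSa : 0 < c^2 * Vf x + 4 * N * Lf x) by (pose proof (pow2_ge_0 c); nra).
  set (S := sqrt (c ^ 2 * Vf x + 4 * N * Lf x)).
  set (sv := sqrt (Vf x)).
  assert (HS : 0 < S) by (apply sqrt_lt_R0; lra).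
  assert (Hsv : 0 < sv) by (apply sqrt_lt_R0; lra).
  assert (HS2 : S * S = c ^ 2 * Vf x + 4 * N * Lf x) by (apply sqrt_sqrt; lra).
  assert (Hsv2 : sv * sv = Vf x) by (apply sqrt_sqrt; lra).
  set (vp := 2 / (x+1)^3). set (lp := / ((1+x) * ln 2)).
  assert (Hvp : 0 < vp) by (apply Rdiv_lt_0_compat; [lra| apply pow_lt; lra]).
  assert (Hlp : 0 < lp) by (apply Rinv_0_lt_compat; nra).
  assert (HK : 0 <= 2 * lp * Vf x - vp * Lf x).
  { pose proof (ln_le_x x ltac:(lra)).
    replace (2 * lp * Vf x - vp * Lf x) with (2 * (x*(x+2) - ln (1+x)) / ((1+x)^3 * ln 2)).
    2:{ unfold lp, vp, Lf. rewrite Vf_eq by lra. field. lra. }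
    apply Rmult_le_pos. nra. left. apply Rinv_0_lt_compat. apply Rmult_lt_0_compat; [apply pow_lt|]; lra. }
  set (X := (c^2 * vp + 4 * N * lp) * sv). set (Y := c * vp * S).
  assert (HX : 0 < X). { unfold X. apply Rmult_lt_0_compat; [|lra]. pose proof (pow2_ge_0 c). nra. }
  assert (Hlt : Y < X).
  { destruct (Rle_or_lt c 0) as [Hc|Hc].
    - unfold Y. assert (c * vp * S <= 0). { assert (0 <= - c * vp * S) by (apply Rmult_le_pos; nra). lra. } lra.
    - assert (HY : 0 < Y) by (unfold Y; apply Rmult_lt_0_compat; nra).
      assert (X * X - Y * Y = 4 * N * (c^2 * vp * (2 * lp * Vf x - vp * Lf x) + 4 * N * lp^2 * Vf x)).
      { unfold X, Y. replace ((c ^ 2 * vp + 4 * N * lp) * sv * ((c ^ 2 * vp + 4 * N * lp) * sv))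
          with ((c ^ 2 * vp + 4 * N * lp)^2 * (sv * sv)) by ring.
        replace (c * vp * S * (c * vp * S)) with (c^2 * vp^2 * (S * S)) by ring.
        rewrite HS2, Hsv2. ring. }
      assert (0 < c^2 * vp * (2 * lp * Vf x - vp * Lf x) + 4 * N * lp^2 * Vf x).
      { assert (0 <= c^2 * vp * (2 * lp * Vf x - vp * Lf x)).
        { apply Rmult_le_pos; [|lra]. pose proof (pow2_ge_0 c). nra. }
        assert (0 < 4 * N * lp^2 * Vf x). { apply Rmult_lt_0_compat; [apply Rmult_lt_0_compat; [lra | apply pow_lt; lra] | lra]. }
        lra. }
      nra. }
  replace ((c ^ 2 * vp + 4 * N * lp) / (2 * S) - c * (vp / (2 * sv)))
    with ((X - Y) / (2 * S * sv)) by (unfold X, Y; field; lra).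
  apply Rdiv_lt_0_compat; nra.
Qed.

Lemma W_incr c N x y : 0 < N -> 0 < x -> x < y -> Wf c N x < Wf c N y.
Proof.
  intros HN Hx Hxy.
  apply (incr_function (Wf c N) (Finite 0) p_infty
    (fun x => (c^2 * (2 / (x+1)^3) + 4 * N * (/ ((1+x) * ln 2))) / (2 * sqrt (c^2 * Vf x + 4 * N * Lf x))
    - c * ((2 / (x+1)^3) / (2 * sqrt (Vf x))))); simpl; auto; try lra.
  - intros z Hz _. apply W_deriv; lra.
  - intros z Hz _. apply W_deriv_pos; lra.
Qed.

Lemma E_decr c N x y : 0 < N -> (0 < c -> 3 * c^2 * ln 2 <= 2 * N) -> 0 < x -> x < y ->
  Ef c N y < Ef c N x.
Proof.
  intros HN Hc Hx Hxy.
  cut (- Ef c N x < - Ef c N y). lra.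
  apply (incr_function (fun z => - Ef c N z) (Finite 0) p_infty
    (fun x => - ((c^2 * (- alphaf x) + 4 * N * (- betaf x)) / (2 * sqrt (c^2 * Af x + 4 * N * Bf x))
    - c * ((- alphaf x) / (2 * sqrt (Af x))))));
    [ | | simpl; lra | lra | simpl; exact I].
  - intros z Hz _. simpl in Hz. apply (is_derive_opp (Ef c N)). apply E_deriv; lra.
  - intros z Hz _. simpl in Hz. pose proof (E_deriv_neg c N z Hz HN Hc). lra.
Qed.

Lemma W_E c N x : 0 < x -> Wf c N x = sqrt x * Ef c N x.
Proof.
  intros Hx. unfold Wf, Ef.
  assert (HV : Vf x = x * Af x) by (unfold Vf, Af; field; lra).
  assert (HL : Lf x = x * Bf x) by (unfold Lf, Bf; pose proof ln2_pos; field; lra).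
  pose proof (Af_pos x Hx). pose proof (Bf_pos x Hx).
  rewrite HV, HL.
  replace (c ^ 2 * (x * Af x) + 4 * N * (x * Bf x)) with (x * (c^2 * Af x + 4 * N * Bf x)) by ring.
  rewrite !sqrt_mult_alt by lra. ring.
Qed.

Lemma W_cont c N x : 0 <= x -> continuous (Wf c N) x.
Proof.
  intros Hx. unfold Wf, Vf, Lf.
  assert (Hc1 : continuous (fun y : R => 1 - / (y + 1) ^ 2) x).
  { apply (continuous_minus (fun _ => 1) (fun y => / (y+1)^2)).
    apply continuous_const.
    apply continuous_Rinv_comp. 
    apply (continuous_mult (fun y => y + 1) (fun y => (y+1)^1)).
    apply (continuous_plus (fun y => y) (fun _ => 1)). apply continuous_id. apply continuous_const.
    apply (continuous_mult (fun y => y + 1) (fun y => 1)).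
    apply (continuous_plus (fun y => y) (fun _ => 1)). apply continuous_id. apply continuous_const.
    apply continuous_const.
    apply Rgt_not_eq. apply pow_lt. lra. }
  assert (Hc2 : continuous (fun y : R => ln (1 + y) / ln 2) x).
  { apply (continuous_mult (fun y => ln (1 + y)) (fun _ => / ln 2)).
    apply (continuous_comp (fun y => 1 + y) ln).
    apply (continuous_plus (fun _ => 1) (fun y => y)). apply continuous_const. apply continuous_id.
    apply continuous_ln. lra. apply continuous_const. }
  apply (continuous_minus (fun y => sqrt (c ^ 2 * (1 - / (y + 1) ^ 2) + 4 * N * (ln (1 + y) / ln 2)))
    (fun y => c * sqrt (1 - / (y + 1) ^ 2))).
  - apply continuous_sqrt_comp.
    apply (continuous_plus (fun y => c ^ 2 * (1 - / (y + 1) ^ 2)) (fun y => 4 * N * (ln (1 + y) / ln 2))).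
    + apply (continuous_mult (fun _ => c^2) (fun y => (1 - / (y + 1) ^ 2))). apply continuous_const. exact Hc1.
    + apply (continuous_mult (fun _ => 4 * N) (fun y => (ln (1 + y) / ln 2))). apply continuous_const. exact Hc2.
  - apply (continuous_mult (fun _ => c) (fun y => sqrt (1 - / (y + 1) ^ 2))). apply continuous_const.
    apply continuous_sqrt_comp. exact Hc1.
Qed.

Lemma W_0 c N : Wf c N 0 = 0.
Proof.
  unfold Wf, Vf, Lf. replace (1 - / (0 + 1) ^ 2) with 0 by (simpl; field).
  replace (1 + 0) with 1 by ring. rewrite ln_1. replace (c ^ 2 * 0 + 4 * N * (0 / ln 2)) with 0.
  rewrite sqrt_0. ring. pose proof ln2_pos. field. lra.
Qed.

Lemma root_iff_core c N L v s : 0 < N -> 0 < L -> 0 < v -> 0 < s ->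
  (c * sqrt v / s - L + N / (s * s) = 0 <->
   s * (sqrt (c^2 * v + 4 * N * L) - c * sqrt v) = 2 * N).
Proof.
  intros HN HL Hv Hs.
  set (sv := sqrt v). set (S := sqrt (c^2 * v + 4 * N * L)).
  assert (Hsv : 0 < sv) by (apply sqrt_lt_R0; lra).
  assert (HSa : 0 < c^2 * v + 4 * N * L) by (pose proof (pow2_ge_0 c); nra).
  assert (HS : 0 < S) by (apply sqrt_lt_R0; lra).
  assert (HS2 : S * S = c ^ 2 * v + 4 * N * L) by (apply sqrt_sqrt; lra).
  assert (Hsv2 : sv * sv = v) by (apply sqrt_sqrt; lra).
  assert (Hd : S * S - (c * sv) * (c * sv) = 4 * N * L) by (rewrite HS2; replace (c * sv * (c * sv)) with (c^2 * (sv * sv)) by ring; rewrite Hsv2; ring).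
  assert (Hp1 : 0 < S - c * sv /\ 0 < S + c * sv).
  { assert (0 < (S - c * sv) * (S + c * sv)) by nra. split; nra. }
  destruct Hp1 as [Hp1 Hp2].
  assert (HF : c * sv / s - L + N / (s * s) = - (L * s * s - c * sv * s - N) / (s * s)) by (field; lra).
  rewrite HF.
  assert (Hid1 : 4 * L * (L * s * s - c * sv * s - N) = (2 * L * s - c * sv - S) * (2 * L * s - c * sv + S)).
  { replace ((2 * L * s - c * sv - S) * (2 * L * s - c * sv + S)) with ((2 * L * s - c * sv)^2 - S * S) by ring.
    rewrite HS2. replace (c^2 * v) with (c^2 * (sv * sv)) by (rewrite Hsv2; ring). ring. }
  assert (Hid2 : (s * (S - c * sv) - 2 * N) * (S + c * sv) = 2 * N * (2 * L * s - S - c * sv)).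
  { replace ((s * (S - c * sv) - 2 * N) * (S + c * sv)) with (s * (S * S - (c * sv) * (c * sv)) - 2 * N * (S + c * sv)) by ring.
    rewrite Hd. ring. }
  assert (Hq : 0 < 2 * L * s - c * sv + S) by nra.
  split.
  - intros H0.
    assert (L * s * s - c * sv * s - N = 0).
    { assert (Hss : 0 < s * s) by nra.
      apply (Rmult_eq_compat_r (s * s)) in H0. rewrite Rmult_0_l in H0.
      unfold Rdiv in H0. rewrite Rmult_assoc, Rinv_l in H0 by lra. lra. }
    assert (2 * L * s - c * sv - S = 0).
    { assert ((2 * L * s - c * sv - S) * (2 * L * s - c * sv + S) = 0) by (rewrite <- Hid1; rewrite H; ring).
      destruct (Rmult_integral _ _ H1); lra. }
    assert ((s * (S - c * sv) - 2 * N) * (S + c * sv) = 0) by (rewrite Hid2; nra).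
    destruct (Rmult_integral _ _ H2); lra.
  - intros H0.
    assert (2 * L * s - S - c * sv = 0).
    { assert (2 * N * (2 * L * s - S - c * sv) = 0) by (rewrite <- Hid2; rewrite H0; ring).
      destruct (Rmult_integral _ _ H); lra. }
    assert (L * s * s - c * sv * s - N = 0).
    { assert (4 * L * (L * s * s - c * sv * s - N) = 0) by (rewrite Hid1; nra).
      destruct (Rmult_integral _ _ H1); lra. }
    rewrite H1. field. lra.
Qed.

Lemma root_iff eps N m g : 0 < N -> 0 < m -> 0 < g ->
  (Ffun eps N m g = 0 <-> sqrt m * Wf (Qinv eps / ln 2) N g = 2 * N).
Proof.
  intros HN Hm Hg. pose proof ln2_pos as Hl2.
  set (s := sqrt m). assert (Hs : 0 < s) by (apply sqrt_lt_R0; lra).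
  assert (Hs2 : s * s = m) by (apply sqrt_sqrt; lra).
  assert (HF : Ffun eps N m g = (Qinv eps / ln 2) * sqrt (Vf g) / s - Lf g + N / (s * s)).
  { unfold Ffun, log2, Lf, Vf. rewrite sqrt_mult_alt.
    2:{ left. apply Rinv_0_lt_compat. lra. }
    rewrite sqrt_inv. fold s. rewrite Hs2. field. split; lra. }
  rewrite HF. unfold Wf.
  apply root_iff_core; auto. apply Lf_pos; auto. apply Vf_pos; auto.
Qed.

Lemma Ffun_0 eps N m : 0 < N -> 0 < m -> Ffun eps N m 0 <> 0.
Proof.
  intros HN Hm. unfold Ffun, log2.
  replace (1 - / (0 + 1) ^ 2) with 0 by (simpl; field).
  rewrite Rmult_0_r, sqrt_0. replace (1 + 0) with 1 by ring. rewrite ln_1.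
  pose proof ln2_pos.
  replace (0 * Qinv eps / ln 2 - 0 / ln 2 + N / m) with (N / m) by (field; lra).
  apply Rgt_not_eq. apply Rdiv_lt_0_compat; lra.
Qed.

Lemma hyp_c eps N : 0 < N ->
  Qinv eps / sqrt N <= 2 * sqrt (ln 2) / (4 - sqrt 2) ->
  0 < Qinv eps / ln 2 -> 3 * (Qinv eps / ln 2)^2 * ln 2 <= 2 * N.
Proof.
  intros HN Hq Hc. pose proof ln2_pos as Hl2.
  set (q := Qinv eps) in *.
  assert (Hq0 : 0 < q). { apply (Rmult_lt_reg_r (/ ln 2)). apply Rinv_0_lt_compat; lra. rewrite Rmult_0_l. exact Hc. }
  set (r := sqrt 2) in *. assert (Hr : 0 < r) by (apply sqrt_lt_R0; lra).
  assert (Hr2 : r * r = 2) by (apply sqrt_sqrt; lra).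
  assert (Hr15 : r < 3/2) by nra.
  set (sN := sqrt N) in *. assert (HsN : 0 < sN) by (apply sqrt_lt_R0; lra).
  assert (HsN2 : sN * sN = N) by (apply sqrt_sqrt; lra).
  set (sl := sqrt (ln 2)) in *. assert (Hsl : 0 < sl) by (apply sqrt_lt_R0; lra).
  assert (Hsl2 : sl * sl = ln 2) by (apply sqrt_sqrt; lra).
  assert (Hq' : q * (4 - r) <= 2 * sl * sN).
  { apply (Rmult_le_compat_r ((4 - r) * sN)) in Hq; [|nra].
    replace (q / sN * ((4 - r) * sN)) with (q * (4 - r)) in Hq by (field; lra).
    replace (2 * sl / (4 - r) * ((4 - r) * sN)) with (2 * sl * sN) in Hq by (field; lra). exact Hq. }
  assert (Hsq : q * q * ((4 - r) * (4 - r)) <= 4 * ln 2 * N).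
  { assert (0 <= q * (4 - r)) by nra.
    assert (q * (4 - r) * (q * (4 - r)) <= 2 * sl * sN * (2 * sl * sN)) by nra.
    replace (2 * sl * sN * (2 * sl * sN)) with (4 * (sl * sl) * (sN * sN)) in H0 by ring.
    rewrite Hsl2, HsN2 in H0. nra. }
  assert (Hr6 : 6 <= (4 - r) * (4 - r)) by nra.
  replace (3 * (q / ln 2) ^ 2 * ln 2) with (3 * (q * q) / ln 2) by (field; lra).
  apply (Rmult_le_reg_r (ln 2)); [lra|].
  replace (3 * (q * q) / ln 2 * ln 2) with (3 * (q * q)) by (field; lra).
  assert (0 <= q * q) by nra.
  nra.
Qed.

Lemma gam_props eps N D m g : 0 < N ->
  (0 < Qinv eps / ln 2 -> 3 * (Qinv eps / ln 2)^2 * ln 2 <= 2 * N) ->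
  0 < m -> m <= D -> 0 < g -> Ffun eps N m g = 0 ->
  0 < Gam eps N D /\ Ffun eps N D (Gam eps N D) = 0 /\ Gam eps N D <= g /\ D * Gam eps N D <= m * g.
Proof.
  intros HN Hc Hm HmD Hg HF.
  set (c := Qinv eps / ln 2) in *.
  assert (HD : 0 < D) by lra.
  apply root_iff in HF; auto. fold c in HF.
  assert (Hsm : 0 < sqrt m) by (apply sqrt_lt_R0; lra).
  assert (HsD : 0 < sqrt D) by (apply sqrt_lt_R0; lra).
  assert (HsmD : sqrt m <= sqrt D) by (apply sqrt_le_1_alt; lra).
  assert (HWg : 0 < Wf c N g) by nra.
  assert (Hex : exists x, 0 < x /\ Ffun eps N D x = 0).
  { set (y := 2 * N / sqrt D).
    assert (Hy : 0 < y) by (apply Rdiv_lt_0_compat; lra).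
    assert (Hyg : y <= Wf c N g).
    { unfold y. apply (Rmult_le_reg_l (sqrt D)); [lra|].
      replace (sqrt D * (2 * N / sqrt D)) with (2 * N) by (field; lra). nra. }
    set (f := fun x => Wf c N (Rabs x)).
    assert (Hcont : continuity f).
    { intros x. apply continuity_pt_filterlim. unfold f.
      apply (continuous_comp Rabs (Wf c N)). apply continuous_Rabs.
      apply W_cont. apply Rabs_pos. }
    assert (Hf0 : f 0 = 0) by (unfold f; rewrite Rabs_R0; apply W_0).
    assert (Hfg : f g = Wf c N g) by (unfold f; rewrite Rabs_pos_eq by lra; reflexivity).
    destruct (IVT_gen f 0 g y Hcont) as [x [Hx Hfx]].
    { rewrite Hf0, Hfg. rewrite Rmin_left by lra. rewrite Rmax_right by lra. lra. }
    rewrite Rmin_left in Hx by lra. rewrite Rmax_right in Hx by lra.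
    assert (Hx0 : x <> 0). { intros ->. rewrite Hf0 in Hfx. lra. }
    exists x. split; [lra|].
    apply root_iff; auto; try lra. fold c.
    unfold f in Hfx. rewrite Rabs_pos_eq in Hfx by lra. rewrite Hfx. unfold y. field. lra. }
  pose proof (epsilon_spec (inhabits 0) (fun g => 0 < g /\ Ffun eps N D g = 0) Hex) as Hs.
  fold (Gam eps N D) in Hs. set (gs := Gam eps N D) in *.
  destruct Hs as [Hgs HFs]. split; [exact Hgs|]. split; [exact HFs|].
  pose proof HFs as HW. apply root_iff in HW; auto. fold c in HW.
  assert (Hle : gs <= g).
  { destruct (Rle_or_lt gs g) as [Hp|Hp]; [exact Hp|].
    pose proof (W_incr c N g gs HN Hg Hp). nra. }
  split; [exact Hle|].
  rewrite (W_E c N g Hg) in HF. rewrite (W_E c N gs Hgs) in HW.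
  assert (Hsg : 0 < sqrt g) by (apply sqrt_lt_R0; lra).
  assert (Hsgs : 0 < sqrt gs) by (apply sqrt_lt_R0; lra).
  assert (HEg : 0 < Ef c N g).
  { assert (0 < sqrt m * sqrt g) by nra.
    assert (sqrt m * sqrt g * Ef c N g = 2 * N) by (rewrite <- HF; ring). nra. }
  assert (HEle : Ef c N g <= Ef c N gs).
  { destruct Hle as [Hlt|Heq]. left. apply E_decr; auto. rewrite Heq. lra. }
  assert (Hprod : sqrt D * sqrt gs <= sqrt m * sqrt g).
  { assert (E1 : sqrt D * sqrt gs * Ef c N gs = sqrt m * sqrt g * Ef c N g).
    { replace (sqrt D * sqrt gs * Ef c N gs) with (sqrt D * (sqrt gs * Ef c N gs)) by ring.
      replace (sqrt m * sqrt g * Ef c N g) with (sqrt m * (sqrt g * Ef c N g)) by ring. lra. }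
    assert (0 < sqrt D * sqrt gs) by nra.
    destruct (Rle_or_lt (sqrt D * sqrt gs) (sqrt m * sqrt g)) as [Hp|Hp]; [exact Hp|].
    exfalso. assert (sqrt m * sqrt g * Ef c N g < sqrt D * sqrt gs * Ef c N g) by nra.
    assert (sqrt D * sqrt gs * Ef c N g <= sqrt D * sqrt gs * Ef c N gs) by nra. lra. }
  rewrite <- !sqrt_mult_alt in Hprod by lra.
  apply sqrt_le_0 in Hprod; nra.
Qed.

Lemma frac_mono u v s t a b k d ds : 0 <= u -> u <= v -> 0 <= s -> s <= t -> 0 < d -> d <= ds ->
  0 <= a -> 0 <= b -> 0 < k ->
  u * (a + s * b) / (k * ds) <= v * (a + t * b) / (k * d).
Proof.
  intros. unfold Rdiv.
  assert (0 < k * d) by nra. assert (0 < k * ds) by nra.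
  assert (/ (k * ds) <= / (k * d)) by (apply Rinv_le_contravar; nra).
  assert (0 <= a + s * b) by nra.
  assert (u * (a + s * b) <= v * (a + t * b)) by (apply Rmult_le_compat; nra).
  apply Rmult_le_compat; try nra. left; apply Rinv_0_lt_compat; lra.
Qed.

Theorem corollary1 (h1 h2 : C) (D1 D2 mhat Pmax N1 N2 eps1 eps2 : R) :
  h1 <> 0%C -> h2 <> 0%C -> Cmod h1 > Cmod h2 ->
  D1 < D2 -> 0 < mhat -> 0 < Pmax -> 0 < N1 -> 0 < N2 ->
  0 < eps1 < 1 -> 0 < eps2 < 1 ->
  Qinv eps1 / sqrt N1 <= 2 * sqrt (ln 2) / (4 - sqrt 2) ->
  Qinv eps2 / sqrt N2 <= 2 * sqrt (ln 2) / (4 - sqrt 2) ->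
  (exists m1 m2 p1 p2 g1 g2,
     feasible (Cmod h1 ^ 2) (Cmod h2 ^ 2) D1 D2 mhat Pmax N1 N2 eps1 eps2
       m1 m2 p1 p2 g1 g2) ->
  let a1 := Cmod h1 ^ 2 in
  let a2 := Cmod h2 ^ 2 in
  let g1s := Gam eps1 N1 D1 in
  let g2s := Gam eps2 N2 D2 in
  let p1s := (g1s * a2 + g1s * g2s * a1) / (a1 * a2 * (1 - g1s * g2s)) in
  let p2s := (g2s * a1 + g1s * g2s * a2) / (a1 * a2 * (1 - g1s * g2s)) in
  feasible a1 a2 D1 D2 mhat Pmax N1 N2 eps1 eps2 D1 D2 p1s p2s g1s g2s /\
  (forall m1 m2 p1 p2 g1 g2,
     feasible a1 a2 D1 D2 mhat Pmax N1 N2 eps1 eps2 m1 m2 p1 p2 g1 g2 ->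
     objective D1 D2 p1s p2s <= objective m1 m2 p1 p2).
Proof.
  intros Hh1 Hh2 _ _ Hmh _ HN1 HN2 _ _ Hq1 Hq2 Hex a1 a2 g1s g2s p1s p2s.
  assert (Ha1 : 0 < a1) by (unfold a1; apply pow_lt; apply Cmod_gt_0; exact Hh1).
  assert (Ha2 : 0 < a2) by (unfold a2; apply pow_lt; apply Cmod_gt_0; exact Hh2).
  change (Cmod h1 ^ 2) with a1 in Hex. change (Cmod h2 ^ 2) with a2 in Hex.
  clearbody a1 a2.
  pose proof (hyp_c eps1 N1 HN1 Hq1) as Hc1.
  pose proof (hyp_c eps2 N2 HN2 Hq2) as Hc2.
  assert (Hgen : forall m1 m2 p1 p2 g1 g2,
     feasible a1 a2 D1 D2 mhat Pmax N1 N2 eps1 eps2 m1 m2 p1 p2 g1 g2 ->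
     0 < g1s /\ Ffun eps1 N1 D1 g1s = 0 /\ g1s <= g1 /\ D1 * g1s <= m1 * g1 /\
     0 < g2s /\ Ffun eps2 N2 D2 g2s = 0 /\ g2s <= g2 /\ D2 * g2s <= m2 * g2 /\
     0 < g1 /\ 0 < g2 /\ g1 * g2 < 1 /\
     p1 = g1 * (a2 + g2 * a1) / (a1 * a2 * (1 - g1 * g2)) /\
     p2 = g2 * (a1 + g1 * a2) / (a2 * a1 * (1 - g1 * g2))).
  { intros m1 m2 p1 p2 g1 g2 [HF1 [HF2 [Hm1 [Hm2 [Hp1 [Hp2 [HP [Hg1 Hg2]]]]]]]].
    assert (Hd1 : 0 < p2 * a1 + 1) by nra.
    assert (Hd2 : 0 < p1 * a2 + 1) by nra.
    assert (Hg1p : 0 < g1).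
    { assert (0 <= g1) by (rewrite Hg1; apply Rdiv_le_0_compat; nra).
      destruct H as [H|H]; [exact H|]. rewrite <- H in HF1. exfalso. apply (Ffun_0 eps1 N1 m1); lra. }
    assert (Hg2p : 0 < g2).
    { assert (0 <= g2) by (rewrite Hg2; apply Rdiv_le_0_compat; nra).
      destruct H as [H|H]; [exact H|]. rewrite <- H in HF2. exfalso. apply (Ffun_0 eps2 N2 m2); lra. }
    destruct (gam_props eps1 N1 D1 m1 g1 HN1 Hc1 ltac:(lra) ltac:(lra) Hg1p HF1) as [A1 [B1 [C1 E1]]].
    destruct (gam_props eps2 N2 D2 m2 g2 HN2 Hc2 ltac:(lra) ltac:(lra) Hg2p HF2) as [A2 [B2 [C2 E2]]].
    assert (X : p1 * a1 - g1 * (p2 * a1 + 1) = 0) by (rewrite Hg1; field; lra).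
    assert (Y : p2 * a2 - g2 * (p1 * a2 + 1) = 0) by (rewrite Hg2; field; lra).
    assert (Hlt : g1 * g2 < 1).
    { assert (g1 * g2 * ((p2 * a1 + 1) * (p1 * a2 + 1)) = (p1 * a1) * (p2 * a2)).
      { replace (p1 * a1) with (g1 * (p2 * a1 + 1)) by lra. replace (p2 * a2) with (g2 * (p1 * a2 + 1)) by lra. ring. }
      assert (0 < (p2 * a1 + 1) * (p1 * a2 + 1)) by nra.
      assert ((p1 * a1) * (p2 * a2) < (p2 * a1 + 1) * (p1 * a2 + 1)) by nra.
      nra. }
    assert (Hdd : 0 < 1 - g1 * g2) by lra.
    do 11 (split; [assumption|]). split.
    - apply (Rmult_eq_reg_r (a1 * a2 * (1 - g1 * g2))); [|apply Rgt_not_eq; repeat apply Rmult_lt_0_compat; lra].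
      replace (g1 * (a2 + g2 * a1) / (a1 * a2 * (1 - g1 * g2)) * (a1 * a2 * (1 - g1 * g2)))
        with (g1 * (a2 + g2 * a1)) by (field; repeat split; apply Rgt_not_eq; lra).
      assert (p1 * (a1 * a2 * (1 - g1 * g2)) - g1 * (a2 + g2 * a1)
              = a2 * (p1 * a1 - g1 * (p2 * a1 + 1)) + g1 * a1 * (p2 * a2 - g2 * (p1 * a2 + 1))) by ring.
      rewrite X, Y in H. lra.
    - apply (Rmult_eq_reg_r (a2 * a1 * (1 - g1 * g2))); [|apply Rgt_not_eq; repeat apply Rmult_lt_0_compat; lra].
      replace (g2 * (a1 + g1 * a2) / (a2 * a1 * (1 - g1 * g2)) * (a2 * a1 * (1 - g1 * g2)))
        with (g2 * (a1 + g1 * a2)) by (field; repeat split; apply Rgt_not_eq; lra).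
      assert (p2 * (a2 * a1 * (1 - g1 * g2)) - g2 * (a1 + g1 * a2)
              = a1 * (p2 * a2 - g2 * (p1 * a2 + 1)) + g2 * a2 * (p1 * a1 - g1 * (p2 * a1 + 1))) by ring.
      rewrite X, Y in H. lra. }
  destruct Hex as [m1 [m2 [p1 [p2 [g1 [g2 Hf]]]]]].
  pose proof Hf as Hf'.
  destruct (Hgen m1 m2 p1 p2 g1 g2 Hf) as [A1 [B1 [C1 [E1 [A2 [B2 [C2 [E2 [G1 [G2 [G12 [P1 P2]]]]]]]]]]]].
  assert (HD1 : 0 < D1) by (destruct Hf as [_ [_ [Hm1 [Hm2 _]]]]; lra).
  assert (HD2 : 0 < D2) by (destruct Hf as [_ [_ [Hm1 [Hm2 _]]]]; lra).
  assert (Hs12 : g1s * g2s <= g1 * g2) by (apply Rmult_le_compat; lra).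
  assert (Hds : 0 < 1 - g1s * g2s) by lra.
  assert (Hp1s : p1s = g1s * (a2 + g2s * a1) / (a1 * a2 * (1 - g1s * g2s))) by (unfold p1s; field; repeat split; apply Rgt_not_eq; lra).
  assert (Hp2s : p2s = g2s * (a1 + g1s * a2) / (a2 * a1 * (1 - g1s * g2s))) by (unfold p2s; field; repeat split; apply Rgt_not_eq; lra).
  split.
  - destruct Hf' as [_ [_ [Hm1 [Hm2 [_ [_ [HP _]]]]]]].
    unfold feasible.
    split; [exact B1|]. split; [exact B2|]. split; [lra|]. split; [lra|].
    assert (0 < a1 * a2 * (1 - g1s * g2s)) by (repeat apply Rmult_lt_0_compat; lra).
    assert (0 < a2 * a1 * (1 - g1s * g2s)) by (repeat apply Rmult_lt_0_compat; lra).
    assert (Q1 : 0 <= p1s) by (rewrite Hp1s; left; apply Rdiv_lt_0_compat; [apply Rmult_lt_0_compat; nra|lra]).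
    assert (Q2 : 0 <= p2s) by (rewrite Hp2s; left; apply Rdiv_lt_0_compat; [apply Rmult_lt_0_compat; nra|lra]).
    split; [exact Q1|]. split; [exact Q2|]. split.
    + assert (p1s <= p1).
      { rewrite Hp1s, P1. apply frac_mono; try lra; nra. }
      assert (p2s <= p2).
      { rewrite Hp2s, P2. apply frac_mono; try lra; nra. }
      lra.
    + split.
      * assert (Ea : p2s * a1 + 1 = (g2s * a1 + a2) / (a2 * (1 - g1s * g2s))).
        { unfold p2s. field. repeat split; apply Rgt_not_eq; lra. }
        assert (Eb : p1s * a1 = g1s * (g2s * a1 + a2) / (a2 * (1 - g1s * g2s))).
        { unfold p1s. field. repeat split; apply Rgt_not_eq; lra. }
        rewrite Eb, Ea. field. repeat split; apply Rgt_not_eq; nra.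
      * assert (Ea : p1s * a2 + 1 = (g1s * a2 + a1) / (a1 * (1 - g1s * g2s))).
        { unfold p1s. field. repeat split; apply Rgt_not_eq; lra. }
        assert (Eb : p2s * a2 = g2s * (g1s * a2 + a1) / (a1 * (1 - g1s * g2s))).
        { unfold p2s. field. repeat split; apply Rgt_not_eq; lra. }
        rewrite Eb, Ea. field. repeat split; apply Rgt_not_eq; nra.
  - intros m1' m2' p1' p2' g1' g2' Hf2.
    destruct (Hgen m1' m2' p1' p2' g1' g2' Hf2) as [_ [_ [C1' [E1' [_ [_ [C2' [E2' [G1' [G2' [G12' [P1' P2']]]]]]]]]]]].
    unfold objective.
    assert (Hs12' : g1s * g2s <= g1' * g2') by (apply Rmult_le_compat; lra).
    assert (D1 * p1s <= m1' * p1').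
    { rewrite Hp1s, P1'.
      replace (D1 * (g1s * (a2 + g2s * a1) / (a1 * a2 * (1 - g1s * g2s))))
        with ((D1 * g1s) * (a2 + g2s * a1) / (a1 * a2 * (1 - g1s * g2s))) by (unfold Rdiv; ring).
      replace (m1' * (g1' * (a2 + g2' * a1) / (a1 * a2 * (1 - g1' * g2'))))
        with ((m1' * g1') * (a2 + g2' * a1) / (a1 * a2 * (1 - g1' * g2'))) by (unfold Rdiv; ring).
      apply frac_mono; try lra; nra. }
    assert (D2 * p2s <= m2' * p2').
    { rewrite Hp2s, P2'.
      replace (D2 * (g2s * (a1 + g1s * a2) / (a2 * a1 * (1 - g1s * g2s))))
        with ((D2 * g2s) * (a1 + g1s * a2) / (a2 * a1 * (1 - g1s * g2s))) by (unfold Rdiv; ring).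
      replace (m2' * (g2' * (a1 + g1' * a2) / (a2 * a1 * (1 - g1' * g2'))))
        with ((m2' * g2') * (a1 + g1' * a2) / (a2 * a1 * (1 - g1' * g2'))) by (unfold Rdiv; ring).
      apply frac_mono; try lra; nra. }
    lra.
Qed.
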